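(* Let $\mathcal A$ be a transitive Lie algebroid over $M$ with kernel $\mathcal L$. For every triple $(g,h,\nabla)$ where $g$ is a (possibly degenerate) metric on $M$, $h$ is a non-degenerate inner metric on $\mathcal L$ and $\nabla$ is an ordinary connection on $\mathcal A$ with connection 1-form $\omega$, the formula $$\widehat g(X,Y)=g(\rho(X),\rho(Y))+h(\omega(X),\omega(Y)),\qquad X,Y\in\mathcal A,$$ defines an inner non-degenerate metric on $\mathcal A$; and every inner non-degenerate metric $\widehat g$ on $\mathcal A$ arises in this way from exactly one such triple (so that inner non-degenerate metrics on $\mathcal A$ are equivalent to such triples).
   Context: A transitive Lie algebroid over $M$ is a finitely generated projective $C^\infty(M)$-module $\mathcal A$ with Lie bracket and surjective $C^\infty(M)$-linear Lie morphism $\rho:\mathcal A\to\Gamma(TM)$ with $[X,fY]=f[X,Y]+(\rho(X)f)Y$; its kernel $\mathcal L=\ker\rho=\Gamma(\mathbb L)$ for a locally trivial Lie algebra bundle $\mathbb L$; $\iota:\mathcal L\to\mathcal A$ is the inclusion. An inner metric on $\mathcal L$ is a metric $h$ on the vector bundle $\mathbb L$ (a symmetric $C^\infty(M)$-bilinear map $\mathcal L\otimes\mathcal L\to C^\infty(M)$). A metric on $\mathcal A$ is a symmetric $C^\infty(M)$-bilinear map $\widehat g:\mathcal A\otimes\mathcal A\to C^\infty(M)$; it is inner non-degenerate if $\iota^*\widehat g$, $(\gamma,\eta)\mapsto\widehat g(\iota\gamma,\iota\eta)$, is non-degenerate on $\mathbb L$. An ordinary connection is a $C^\infty(M)$-linear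 $\nabla:\Gamma(TM)\to\mathcal A$ with $\rho\circ\nabla=\mathrm{id}$; its connection 1-form $\omega:\mathcal A\to\mathcal L$ is defined by $X=\nabla_{\rho(X)}-\iota(\omega(X))$. *)

(* Defs.v *)
From HB Require Import structures.
From mathcomp Require Import all_boot all_algebra.
Set Implicit Arguments. Unset Strict Implicit. Unset Printing Implicit Defensive.
Import GRing.Theory.
Local Open Scope ring_scope.

Section Defs.
Variable R : comNzRingType.

Definition Rlinear (U V : lmodType R) (f : U -> V) : Prop :=
  forall a x y, f (a *: x + y) = a *: f x + f y.

Definition Rform (V : lmodType R) (f : V -> R) : Prop :=
  forall a x y, f (a *: x + y) = a * f x + f y.

Definition is_metric (V : lmodType R) (b : V -> V -> R) : Prop :=
  (forall x, Rform (b x)) /\ (forall x y, b x y = b y x).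

(* non-degenerate: the musical map V -> Hom_R(V,R), x |-> b x, is bijective
   (for f.g. projective modules over C^oo(M) this is fiberwise non-degeneracy) *)
Definition nondeg_form (V : lmodType R) (b : V -> V -> R) : Prop :=
  (forall x, (forall y, b x y = 0) -> x = 0) /\
  (forall phi : V -> R, Rform phi -> exists x, forall y, b x y = phi y).

Definition fg_projective (V : lmodType R) : Prop :=
  exists n (p : V -> 'rV[R]_n) (s : 'rV[R]_n -> V),
    [/\ Rlinear p, Rlinear s & cancel p s].

Definition derivation (d : R -> R) : Prop :=
  (forall f g, d (f + g) = d f + d g) /\ (forall f g, d (f * g) = d f * g + f * d g).

(* Gamma(TM): module of vector fields acting faithfully on R by derivations,
   with the commutator bracket *)
Definition vector_fields (TM : lmodType R) (act : TM -> R -> R)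
    (brT : TM -> TM -> TM) : Prop :=
  [/\ forall X, derivation (act X),
      forall a X Y f, act (a *: X + Y) f = a * act X f + act Y f,
      forall X Y, (forall f, act X f = act Y f) -> X = Y &
      forall X Y f, act (brT X Y) f = act X (act Y f) - act Y (act X f)].

Definition transitive_Lie_algebroid (TM : lmodType R) (act : TM -> R -> R)
    (brT : TM -> TM -> TM) (A : lmodType R) (brA : A -> A -> A)
    (rho : A -> TM) : Prop :=
  [/\ fg_projective A,
      (forall x y z, brA (x + y) z = brA x z + brA y z)
      /\ (forall x, brA x x = 0)
      /\ (forall x y z, brA x (brA y z) + brA y (brA z x) + brA z (brA x y) = 0),
      Rlinear rho /\ (forall X, exists x, rho x = X),
      forall x y, rho (brA x y) = brT (rho x) (rho y) &
      forall x f y, brA x (f *: y) = f *: brA x y + act (rho x) f *: y].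

Definition kernel_inclusion (TM A L : lmodType R) (rho : A -> TM)
    (iota : L -> A) : Prop :=
  [/\ Rlinear iota, injective iota &
      forall x, rho x = 0 <-> exists l, iota l = x].

Definition ordinary_connection (TM A : lmodType R) (rho : A -> TM)
    (nabla : TM -> A) : Prop :=
  Rlinear nabla /\ forall X, rho (nabla X) = X.

Definition connection_form (TM A L : lmodType R) (rho : A -> TM)
    (iota : L -> A) (nabla : TM -> A) (omega : A -> L) : Prop :=
  forall x, x = nabla (rho x) - iota (omega x).

Definition inner_part (A L : lmodType R) (iota : L -> A) (ghat : A -> A -> R) :
  L -> L -> R := fun l m => ghat (iota l) (iota m).

Definition inner_nondegenerate (A L : lmodType R) (iota : L -> A)
    (ghat : A -> A -> R) : Prop :=
  nondeg_form (inner_part iota ghat).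

Definition induced_metric (TM A L : lmodType R) (rho : A -> TM)
    (g : TM -> TM -> R) (h : L -> L -> R) (omega : A -> L) : A -> A -> R :=
  fun x y => g (rho x) (rho y) + h (omega x) (omega y).

End Defs.

(* Main.v *)
Require Import Defs.
From HB Require Import structures.
From mathcomp Require Import all_boot all_algebra.
From Stdlib Require Import FunctionalExtensionality ClassicalEpsilon.
Local Open Scope ring_scope.
Import GRing.Theory.
Set Implicit Arguments. Unset Strict Implicit.

Section Aux.
Variable R : comNzRingType.

Lemma lin_add (U V : lmodType R) (f : U -> V) : Rlinear f ->
  forall x y, f (x + y) = f x + f y.
Proof. by move=> H x y; have := H 1 x y; rewrite !scale1r. Qed.

Lemma lin0 (U V : lmodType R) (f : U -> V) : Rlinear f -> f 0 = 0.
Proof.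
move=> H; have E := lin_add H 0 0; rewrite addr0 in E.
by apply: (addrI (f 0)); rewrite addr0 -E.
Qed.

Lemma lin_opp (U V : lmodType R) (f : U -> V) : Rlinear f ->
  forall x, f (- x) = - f x.
Proof.
move=> H x; apply: (addrI (f x)); rewrite -lin_add // !subrr; exact: lin0.
Qed.

Lemma lin_sub (U V : lmodType R) (f : U -> V) : Rlinear f ->
  forall x y, f (x - y) = f x - f y.
Proof. by move=> H x y; rewrite lin_add // lin_opp. Qed.

Lemma form_add (V : lmodType R) (f : V -> R) : Rform f ->
  forall x y, f (x + y) = f x + f y.
Proof. by move=> H x y; have := H 1 x y; rewrite scale1r mul1r. Qed.

Lemma form0 (V : lmodType R) (f : V -> R) : Rform f -> f 0 = 0.
Proof.
move=> H; have E := form_add H 0 0; rewrite addr0 in E.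
by apply: (addrI (f 0)); rewrite addr0 -E.
Qed.

Lemma form_opp (V : lmodType R) (f : V -> R) : Rform f ->
  forall x, f (- x) = - f x.
Proof.
move=> H x; apply: (addrI (f x)); rewrite -form_add // !subrr; exact: form0.
Qed.

Lemma form_sub (V : lmodType R) (f : V -> R) : Rform f ->
  forall x y, f (x - y) = f x - f y.
Proof. by move=> H x y; rewrite form_add // form_opp. Qed.

Lemma form_scale (V : lmodType R) (f : V -> R) : Rform f ->
  forall a x, f (a *: x) = a * f x.
Proof. by move=> H a x; have := H a x 0; rewrite !addr0 form0 // addr0. Qed.

Lemma met_subl (V : lmodType R) (b : V -> V -> R) : is_metric b ->
  forall x y z, b (x - y) z = b x z - b y z.
Proof. by move=> [Hb Hs] x y z; rewrite Hs form_sub // !(Hs z). Qed.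

Lemma met_addl (V : lmodType R) (b : V -> V -> R) : is_metric b ->
  forall x y z, b (x + y) z = b x z + b y z.
Proof. by move=> [Hb Hs] x y z; rewrite Hs form_add // !(Hs z). Qed.

Lemma met_scalel (V : lmodType R) (b : V -> V -> R) : is_metric b ->
  forall a x z, b (a *: x) z = a * b x z.
Proof. by move=> [Hb Hs] a x z; rewrite Hs form_scale // !(Hs z). Qed.

Lemma met_split (V : lmodType R) (b : V -> V -> R) (L : lmodType R)
  (iota : L -> V) : is_metric b ->
  forall u v p q, (forall l, b u (iota l) = 0) -> (forall l, b v (iota l) = 0) ->
  b (u - iota p) (v - iota q) = b u v + b (iota p) (iota q).
Proof.
move=> Hb u v p q Hu Hv.
have [Hf Hs] := Hb.
rewrite form_sub // !met_subl // Hu (Hs (iota p) v) Hv.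
by rewrite subr0 sub0r opprK.
Qed.

Variables (TM A L : lmodType R) (rho : A -> TM) (iota : L -> A).
Hypotheses (Hrho : Rlinear rho) (Hi : Rlinear iota) (Hinj : injective iota)
  (Hker : forall x, rho x = 0 <-> exists l, iota l = x).

Lemma rho_iota l : rho (iota l) = 0.
Proof. by apply/Hker; exists l. Qed.

Section Conn.
Variables (g : TM -> TM -> R) (h : L -> L -> R) (nabla : TM -> A) (omega : A -> L).
Hypotheses (Hg : is_metric g) (Hh : is_metric h)
  (Hn : ordinary_connection rho nabla) (Hom : connection_form rho iota nabla omega).

Lemma iota_omega z : iota (omega z) = nabla (rho z) - z.
Proof.
have E := Hom z; set w := iota (omega z) in E *.
by rewrite {2}E opprB addrC subrK.
Qed.

Lemma omega_lin : Rlinear omega.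
Proof.
have [Hnl Hnr] := Hn.
move=> a x y; apply: Hinj.
rewrite Hi !iota_omega Hrho Hnl.
by rewrite scalerBr opprD addrACA.
Qed.

Lemma omega_iota l : omega (iota l) = - l.
Proof.
have [Hnl Hnr] := Hn.
apply: Hinj; rewrite iota_omega rho_iota lin0 // sub0r lin_opp //.
Qed.

Lemma omega_nabla X : omega (nabla X) = 0.
Proof.
have [Hnl Hnr] := Hn.
by apply: Hinj; rewrite iota_omega Hnr subrr lin0.
Qed.

Lemma ind_ii l m : induced_metric rho g h omega (iota l) (iota m) = h l m.
Proof.
have [Hgf Hgs] := Hg; have [Hhf Hhs] := Hh.
rewrite /induced_metric !rho_iota form0 // add0r !omega_iota.
by rewrite form_opp // Hhs form_opp // opprK Hhs.
Qed.

Lemma ind_ni X l : induced_metric rho g h omega (nabla X) (iota l) = 0.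
Proof.
have [Hgf Hgs] := Hg; have [Hhf Hhs] := Hh.
rewrite /induced_metric rho_iota form0 // add0r omega_nabla.
by rewrite Hhs form0.
Qed.

Lemma ind_nn X Y : induced_metric rho g h omega (nabla X) (nabla Y) = g X Y.
Proof.
have [Hgf Hgs] := Hg; have [Hhf Hhs] := Hh; have [Hnl Hnr] := Hn.
by rewrite /induced_metric !Hnr !omega_nabla form0 // addr0.
Qed.

Lemma ind_metric : is_metric (induced_metric rho g h omega).
Proof.
have [Hgf Hgs] := Hg; have [Hhf Hhs] := Hh; have Ho := omega_lin.
split.
  move=> x a y z; rewrite /induced_metric Hrho Ho Hgf Hhf.
  by rewrite mulrDr addrACA.
by move=> x y; rewrite /induced_metric Hgs Hhs.
Qed.
End Conn.

Section Lift.
Variable ghat : A -> A -> R.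
Hypotheses (Hgh : is_metric ghat) (Hnd : inner_nondegenerate iota ghat).

Lemma lift_uniq x y : rho x = rho y ->
  (forall l, ghat x (iota l) = 0) -> (forall l, ghat y (iota l) = 0) -> x = y.
Proof.
move=> E Hx Hy.
have : rho (x - y) = 0 by rewrite lin_sub // E subrr.
move/Hker=> [k Hk].
have [Hnd1 _] := Hnd.
have k0 : k = 0.
  apply: Hnd1 => m; rewrite /inner_part Hk met_subl // Hx Hy subrr //.
apply/eqP; rewrite -subr_eq0 -Hk k0 lin0 //.
Qed.

Lemma lift_ex (Hs : forall X, exists x, rho x = X) X :
  exists x, rho x = X /\ forall l, ghat x (iota l) = 0.
Proof.
have [x0 Hx0] := Hs X.
have [Hf Hsym] := Hgh.
have [_ Hnd2] := Hnd.
have [l0 Hl0] : exists l0, forall m, inner_part iota ghat l0 m = ghat x0 (iota m).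
  apply: Hnd2 => a m k; by rewrite Hi Hf.
exists (x0 - iota l0); split.
  by rewrite lin_sub // rho_iota subr0.
move=> l; rewrite met_subl // -Hl0 /inner_part subrr //.
Qed.
End Lift.
End Aux.

Theorem proposition2p7 (R : comNzRingType) (TM : lmodType R)
    (act : TM -> R -> R) (brT : TM -> TM -> TM)
    (A : lmodType R) (brA : A -> A -> A) (rho : A -> TM)
    (L : lmodType R) (iota : L -> A) :
  vector_fields act brT ->
  transitive_Lie_algebroid act brT brA rho ->
  kernel_inclusion rho iota ->
  (forall (g : TM -> TM -> R) (h : L -> L -> R) (nabla : TM -> A) (omega : A -> L),
      is_metric g -> is_metric h -> nondeg_form h ->
      ordinary_connection rho nabla -> connection_form rho iota nabla omega ->
      is_metric (induced_metric rho g h omega) /\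
      inner_nondegenerate iota (induced_metric rho g h omega)) /\
  (forall ghat : A -> A -> R,
      is_metric ghat -> inner_nondegenerate iota ghat ->
      exists! t : (TM -> TM -> R) * (L -> L -> R) * (TM -> A),
        let: (g, h, nabla) := t in
        [/\ is_metric g, is_metric h, nondeg_form h,
            ordinary_connection rho nabla &
            exists omega : A -> L, connection_form rho iota nabla omega /\
              ghat = induced_metric rho g h omega]).
Proof.
move=> _ [_ _ [Hrho Hsurj] _ _] [Hi Hinj Hker].
split.
  move=> g h nabla omega Hg Hh Hhnd Hn Hom; split.
    exact: (ind_metric Hrho Hi Hinj Hg Hh Hn Hom).
  rewrite /inner_nondegenerate; have -> : inner_part iota (induced_metric rho g h omega) = h.
    apply: functional_extensionality => l; apply: functional_extensionality => m.
    exact: (ind_ii Hi Hinj Hker Hg Hh Hn Hom).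
  exact: Hhnd.
move=> ghat Hgh Hnd.
pose nabla X := proj1_sig (constructive_indefinite_description _
                  (lift_ex Hrho Hi Hker Hgh Hnd Hsurj X)).
have Hnab X : rho (nabla X) = X /\ forall l, ghat (nabla X) (iota l) = 0.
  exact: (proj2_sig (constructive_indefinite_description _
                  (lift_ex Hrho Hi Hker Hgh Hnd Hsurj X))).
have Hnl : Rlinear nabla.
  move=> a X Y; apply: (lift_uniq Hrho Hi Hker Hgh Hnd).
  - by rewrite Hrho !(proj1 (Hnab _)).
  - by move=> l; rewrite (proj2 (Hnab _)).
  - by move=> l; rewrite met_addl // met_scalel // !(proj2 (Hnab _)) mulr0 addr0.
have Hn : ordinary_connection rho nabla by split=> // X; exact: (proj1 (Hnab X)).
have Hkx x : exists l, iota l = nabla (rho x) - x.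
  by apply/Hker; rewrite lin_sub // (proj1 (Hnab _)) subrr.
pose omega x := proj1_sig (constructive_indefinite_description _ (Hkx x)).
have Hom : connection_form rho iota nabla omega.
  move=> x; rewrite /omega; case: constructive_indefinite_description => l /= ->.
  by rewrite opprB addrC subrK.
have [Hghf Hghs] := Hgh.
pose g X Y := ghat (nabla X) (nabla Y).
have Hg : is_metric g.
  split; last by move=> X Y; rewrite /g Hghs.
  by move=> X a Y Z; rewrite /g Hnl Hghf.
have Hh : is_metric (inner_part iota ghat).
  split; last by move=> l m; rewrite /inner_part Hghs.
  by move=> l a m k; rewrite /inner_part Hi Hghf.
have Heq : ghat = induced_metric rho g (inner_part iota ghat) omega.
  apply: functional_extensionality => x; apply: functional_extensionality => y.
  rewrite {1}(Hom x) {1}(Hom y) met_split //.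
  - by move=> l; case: (Hnab (rho x)).
  - by move=> l; case: (Hnab (rho y)).
exists (g, inner_part iota ghat, nabla); split.
  split=> //; exists omega; split=> //.
move=> [[g' h'] nabla'] [Hg' Hh' Hhnd' Hn' [omega' [Hom' Heq']]].
have Eh : inner_part iota ghat = h'.
  apply: functional_extensionality => l; apply: functional_extensionality => m.
  by rewrite /inner_part Heq' (ind_ii Hi Hinj Hker Hg' Hh' Hn' Hom').
have En : nabla = nabla'.
  apply: functional_extensionality => X.
  apply: (lift_uniq Hrho Hi Hker Hgh Hnd).
  - by rewrite (proj1 (Hnab _)) (proj2 Hn').
  - by move=> l; case: (Hnab X).
  - by move=> l; rewrite Heq' (ind_ni Hi Hinj Hker Hg' Hh' Hn' Hom').
have Eg : g = g'.
  apply: functional_extensionality => X; apply: functional_extensionality => Y.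
  by rewrite /g En Heq' (ind_nn Hi Hinj Hg' Hh' Hn' Hom').
by rewrite Eh En Eg.
Qed.
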